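(* Let $(S,\mathcal{E})$ be a qualitative evidence frame. Define $i,u,d:2^{\mathcal{E}}\to\tau_{\mathcal{E}}$ by $i(\emptyset)=u(\emptyset)=d(\emptyset)=S$ and, for nonempty $\mathbf{E}\subseteq\mathcal{E}$: $i(\mathbf{E})=\bigcap\mathbf{E}$, $u(\mathbf{E})=\bigcup\mathbf{E}$, and $d(\mathbf{E})$ is the least (w.r.t. inclusion) element of $\tau_{\mathbf{E}}$ that is dense in $\bigcup\mathbf{E}$ w.r.t. $\tau_{\mathbf{E}}$ (such a least element exists). Then $\{i,u,d\}$ is a set of evidence allocation functions on $(S,\mathcal{E})$.
   Context: A qualitative evidence frame is a pair $(S,\mathcal{E})$ where $S$ is a finite nonempty set and $\mathcal{E}$ is a nonempty family of subsets of $S$ with $\emptyset\notin\mathcal{E}$ and $S\notin\mathcal{E}$. For any family $\mathbf{E}\subseteq 2^S$, $\tau_{\mathbf{E}}$ denotes the topology on $S$ generated by $\mathbf{E}$ (as a subbasis): it consists of $\emptyset$, $S$, all finite intersections of members of $\mathbf{E}$, and all arbitrary unions of such finite intersections. For $\mathbf{E}\subseteq\mathcal{E}$, an element $D\in\tau_{\mathbf{E}}$ is called dense in $\bigcup\mathbf{E}$ w.r.t. $\tau_{\mathbf{E}}$ if $D\cap T\neq\emptyset$ for every nonempty $T\in\tau_{\mathbf{E}}$. A set of evidence allocation functions on $(S,\mathcal{E})$ is a set $\mathfrak{F}$ of functions $2^{\mathcal{E}}\to\tau_{\mathcal{E}}$ such that for all $f,g\in\mathfrak{F}$: (1) $f(\emptyset)=S$;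 (2) for every nonempty $\mathbf{E}\subseteq\mathcal{E}$, either $f(\mathbf{E})=\emptyset$, or $f(\mathbf{E})\in\tau_{\mathbf{E}}$ and $f(\mathbf{E})$ is dense in $\bigcup\mathbf{E}$ w.r.t. $\tau_{\mathbf{E}}$; (3) for every $\mathbf{E}\subseteq\mathcal{E}$, $f(\mathbf{E})\subseteq g(\mathbf{E})$ or $g(\mathbf{E})\subseteq f(\mathbf{E})$. *)

(* Defs.v *)
From mathcomp Require Import all_boot.
Set Implicit Arguments. Unset Strict Implicit. Unset Printing Implicit Defensive.

Section EvidenceFrames.
Variable S : finType.

Definition fin_inters (F : {set {set S}}) : {set {set S}} :=
  [set \bigcap_(X in G) X | G : {set {set S}} in powerset F].

(* A \in tau_F: A is a union of finite intersections of members of F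
   (the empty union gives set0, the empty intersection gives setT). *)
Definition open_in (F : {set {set S}}) (A : {set S}) : bool :=
  [exists B : {set {set S}}, (B \subset fin_inters F) && (A == \bigcup_(X in B) X)].

(* D is dense (in \bigcup F) w.r.t. tau_F. *)
Definition dense_in (F : {set {set S}}) (D : {set S}) : bool :=
  [forall T : {set S}, (open_in F T && (T != set0)) ==> (D :&: T != set0)].

Definition open_dense (F : {set {set S}}) (D : {set S}) : bool :=
  open_in F D && dense_in F D.

Definition least_open_dense (F : {set {set S}}) (D : {set S}) : bool :=
  open_dense F D && [forall D' : {set S}, open_dense F D' ==> (D \subset D')].

Definition evidence_frame (E : {set {set S}}) : Prop :=
  [set: S] != set0 /\ E != set0 /\ set0 \notin E /\ [set: S] \notin E.

Definition evidence_allocation_set (E : {set {set S}})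
    (Fs : ({set {set S}} -> {set S}) -> Prop) : Prop :=
  forall f g, Fs f -> Fs g ->
    (forall EE : {set {set S}}, EE \subset E -> open_in E (f EE)) /\
    f set0 = [set: S] /\
    (forall EE : {set {set S}}, EE \subset E -> EE != set0 ->
        f EE = set0 \/ (open_in EE (f EE) /\ dense_in EE (f EE))) /\
    (forall EE : {set {set S}}, EE \subset E -> (f EE \subset g EE) \/ (g EE \subset f EE)).

Definition alloc_i (EE : {set {set S}}) : {set S} :=
  if EE == set0 then [set: S] else \bigcap_(X in EE) X.

Definition alloc_u (EE : {set {set S}}) : {set S} :=
  if EE == set0 then [set: S] else \bigcup_(X in EE) X.

(* The least open dense set (its existence is part of the main statement);
   set0 is only a default when no such set exists. *)
Definition alloc_d (EE : {set {set S}}) : {set S} :=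
  if EE == set0 then [set: S]
  else odflt set0 [pick D | least_open_dense EE D].

End EvidenceFrames.

(* Main.v *)
Require Import Defs.
From mathcomp Require Import all_boot.
Set Implicit Arguments. Unset Strict Implicit. Unset Printing Implicit Defensive.

Lemma fin_intersP (S : finType) (F : {set {set S}}) X :
  reflect (exists2 G : {set {set S}}, G \subset F & X = \bigcap_(Y in G) Y) (X \in fin_inters F).
Proof.
apply: (iffP imsetP) => [[G]|[G]]; rewrite ?powersetE => ? ?; exists G => //.
by rewrite powersetE.
Qed.

Lemma open_inP (S : finType) (F : {set {set S}}) A :
  reflect (exists2 B : {set {set S}}, B \subset fin_inters F & A = \bigcup_(X in B) X) (open_in F A).
Proof.
apply: (iffP existsP) => [[B /andP [h /eqP e]]|[B h e]]; exists B => //.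
by rewrite h e eqxx.
Qed.

Lemma open_inI (S : finType) (F : {set {set S}}) A B :
  open_in F A -> open_in F B -> open_in F (A :&: B).
Proof.
move=> /open_inP [BA sA ->] /open_inP [BB sB ->].
apply/open_inP; exists [set X :&: Y | X in BA, Y in BB].
- apply/subsetP => Z /imset2P [X Y XA YB ->].
  have /fin_intersP [G1 sG1 ->] := subsetP sA _ XA.
  have /fin_intersP [G2 sG2 ->] := subsetP sB _ YB.
  apply/fin_intersP; exists (G1 :|: G2); first by rewrite subUset sG1.
  by rewrite bigcap_setU.
- apply/setP => x; rewrite inE; apply/andP/bigcupP.
  + case=> /bigcupP [X XA xX] /bigcupP [Y YB xY]; exists (X :&: Y).
      by apply/imset2P; exists X Y.
    by rewrite inE xX.
  + case=> Z /imset2P [X Y XA YB ->]; rewrite inE => /andP [xX xY].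
    by split; apply/bigcupP; [exists X| exists Y].
Qed.

Lemma setT_fin (S : finType) (F : {set {set S}}) : [set: S] \in fin_inters F.
Proof. by apply/fin_intersP; exists set0; rewrite ?sub0set // big_set0. Qed.

Lemma open_setT (S : finType) (F : {set {set S}}) : open_in F [set: S].
Proof.
apply/open_inP; exists [set [set: S]]; first by rewrite sub1set setT_fin.
by rewrite big_set1.
Qed.

Lemma open_mono (S : finType) (F E : {set {set S}}) A :
  F \subset E -> open_in F A -> open_in E A.
Proof.
move=> sFE /open_inP [B sB ->]; apply/open_inP; exists B => //.
apply/subsetP => X /(subsetP sB) /fin_intersP [G sG ->].
by apply/fin_intersP; exists G => //; apply: subset_trans sFE.
Qed.

Lemma bigcap_sub_open (S : finType) (F : {set {set S}}) D :
  open_in F D -> D != set0 -> \bigcap_(X in F) X \subset D.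
Proof.
move=> /open_inP [B sB eD] /set0Pn [x xD].
move: xD; rewrite eD => /bigcupP [Y YB _].
have /fin_intersP [G sG eY] := subsetP sB _ YB.
apply/subsetP => z /bigcapP zF; apply/bigcupP; exists Y => //.
by rewrite eY; apply/bigcapP => X XG; apply: zF; apply: (subsetP sG).
Qed.

Lemma open_bigcap (S : finType) (F : {set {set S}}) :
  open_in F (\bigcap_(X in F) X).
Proof.
apply/open_inP; exists [set \bigcap_(X in F) X]; last by rewrite big_set1.
by rewrite sub1set; apply/fin_intersP; exists F.
Qed.

Lemma open_bigcup (S : finType) (F : {set {set S}}) :
  open_in F (\bigcup_(X in F) X).
Proof.
apply/open_inP; exists F => //.
apply/subsetP => X XF; apply/fin_intersP; exists [set X]; first by rewrite sub1set.
by rewrite big_set1.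
Qed.

Lemma dense_bigcap (S : finType) (F : {set {set S}}) :
  \bigcap_(X in F) X != set0 -> dense_in F (\bigcap_(X in F) X).
Proof.
move=> ne; apply/forallP => T; apply/implyP => /andP [oT nT].
by move/setIidPl: (bigcap_sub_open oT nT) => ->.
Qed.

Lemma dense_bigcup (S : finType) (F : {set {set S}}) :
  \bigcup_(X in F) X != set0 -> dense_in F (\bigcup_(X in F) X).
Proof.
move=> ne; apply/forallP => T; apply/implyP => /andP [oT nT].
move: oT nT => /open_inP [B sB ->] /set0Pn [x /bigcupP [Y YB xY]].
have /fin_intersP [G sG eY] := subsetP sB _ YB.
have [G0|/set0Pn [Z ZG]] := eqVneq G set0.
  move: ne => /set0Pn [y yU]; apply/set0Pn; exists y; rewrite inE yU /=.
  by apply/bigcupP; exists Y => //; rewrite eY G0 big_set0 inE.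
apply/set0Pn; exists x; rewrite inE; apply/andP; split.
  apply/bigcupP; exists Z; first by apply: (subsetP sG).
  by move: xY; rewrite eY => /bigcapP; apply.
by apply/bigcupP; exists Y.
Qed.

Lemma dense_setT (S : finType) (F : {set {set S}}) : dense_in F [set: S].
Proof. by apply/forallP => T; apply/implyP => /andP [_]; rewrite setTI. Qed.

Lemma open_denseI (S : finType) (F : {set {set S}}) A B :
  open_dense F A -> open_dense F B -> open_dense F (A :&: B).
Proof.
move=> /andP [oA dA] /andP [oB dB]; rewrite /open_dense open_inI //=.
apply/forallP => T; apply/implyP => /andP [oT nT].
have oAT : open_in F (A :&: T) by apply: open_inI.
have nAT : A :&: T != set0 by move/forallP: dA => /(_ T); rewrite oT nT.
move/forallP: dB => /(_ (A :&: T)); rewrite oAT nAT /=.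
by rewrite setIA (setIC B).
Qed.

Lemma least_exists (S : finType) (F : {set {set S}}) :
  exists D, least_open_dense F D.
Proof.
exists (\bigcap_(D | open_dense F D) D).
apply/andP; split.
  apply: (big_ind (open_dense F)) => //; last exact: open_denseI.
  by rewrite /open_dense open_setT dense_setT.
apply/forallP => D'; apply/implyP => h.
by apply/subsetP => x /bigcapP; apply.
Qed.

Lemma alloc_dP (S : finType) (EE : {set {set S}}) :
  EE != set0 -> least_open_dense EE (alloc_d EE).
Proof.
rewrite /alloc_d => /negbTE ->.
case: pickP => [D //|H]; have [D HD] := least_exists EE.
by rewrite H in HD.
Qed.

Lemma open_dense_n0 (S : finType) (F : {set {set S}}) D :
  [set: S] != set0 -> open_dense F D -> D != set0.
Proof.
move=> nT /andP [_ /forallP /(_ [set: S])]; rewrite open_setT nT /=.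
by rewrite setIT.
Qed.

Lemma bigcup_n0 (S : finType) (E EE : {set {set S}}) :
  EE \subset E -> set0 \notin E -> EE != set0 -> \bigcup_(X in EE) X != set0.
Proof.
move=> sE n0 /set0Pn [X XE].
have : X != set0 by apply: contraNneq n0 => <-; apply: (subsetP sE).
case/set0Pn => x xX; apply/set0Pn; exists x; apply/bigcupP; by exists X.
Qed.

Lemma chain (S : finType) (E EE : {set {set S}}) :
  evidence_frame E -> EE \subset E ->
  alloc_i EE \subset alloc_d EE /\ alloc_d EE \subset alloc_u EE.
Proof.
move=> [nT [_ [n0 _]]] sE; rewrite /alloc_i /alloc_u.
have [->|ne] := eqVneq EE set0; first by rewrite /alloc_d eqxx.
have /andP [od /forallP lt] := alloc_dP ne.
split.
  by case/andP: (od) => oD _; apply: bigcap_sub_open => //; apply: open_dense_n0 od.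
apply: (implyP (lt _)); rewrite /open_dense open_bigcup /=.
by apply: dense_bigcup; apply: bigcup_n0 sE n0 ne.
Qed.

Lemma one (S : finType) (E : {set {set S}}) f :
  evidence_frame E ->
  (f = @alloc_i S \/ f = @alloc_u S \/ f = @alloc_d S) ->
    (forall EE : {set {set S}}, EE \subset E -> open_in E (f EE)) /\
    f set0 = [set: S] /\
    (forall EE : {set {set S}}, EE \subset E -> EE != set0 ->
        f EE = set0 \/ (open_in EE (f EE) /\ dense_in EE (f EE))).
Proof.
move=> [nT [_ [n0 _]]] [->|[->|->]].
- rewrite /alloc_i eqxx; split; [move=> EE sE; case: eqP => _|split => //].
    exact: open_setT.
  exact: open_mono sE (open_bigcap _).
  move=> EE sE /negbTE ->.
  have [e|ne] := eqVneq (\bigcap_(X in EE) X) set0; [by left|right].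
  by rewrite open_bigcap dense_bigcap.
- rewrite /alloc_u eqxx; split; [move=> EE sE; case: eqP => _|split => //].
    exact: open_setT.
  exact: open_mono sE (open_bigcup _).
  move=> EE sE ne; rewrite (negbTE ne); right.
  by rewrite open_bigcup dense_bigcup // (bigcup_n0 sE n0 ne).
- split; last split; first last.
  + move=> EE sE ne; right.
    by case/andP: (alloc_dP ne) => /andP [-> ->].
  + by rewrite /alloc_d eqxx.
  move=> EE sE; have [->|ne] := eqVneq EE set0.
    by rewrite /alloc_d eqxx open_setT.
  by case/andP: (alloc_dP ne) => /andP [o _] _; apply: open_mono sE o.
Qed.

Theorem corollary2 (S : finType) (E : {set {set S}}) :
  evidence_frame E ->
  (forall EE : {set {set S}}, EE \subset E -> EE != set0 ->
     exists D : {set S}, least_open_dense EE D) /\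
  evidence_allocation_set E
    (fun f => f = @alloc_i S \/ f = @alloc_u S \/ f = @alloc_d S).
Proof.
move=> fr; split; first by move=> EE _ _; apply: least_exists.
move=> f g Hf Hg.
have [h1 [h2 h3]] := one fr Hf.
split => //; split => //; split => // EE sE.
have [id du] := chain fr sE.
have iu := subset_trans id du.
case: Hf => [->|[->|->]]; case: Hg => [->|[->|->]];
  by [left | right].
Qed.
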